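(* Let $r\ge 1$ be an integer. For every nonnegative integer $n$, the number of overpartitions of $n$ in which every non-overlined part is greater than $r$ and has the same parity as $r+1$ (overlined parts being unrestricted apart from being distinct) equals the number of partitions of $n$ whose mex sequence has length at least $r$.
   Context: A partition of $n$ is a finite non-increasing sequence of positive integers (parts) summing to $n$ (the empty partition is the unique partition of $0$). For a partition $\lambda$, $\mathrm{mex}(\lambda)$ is the least positive integer that is not a part of $\lambda$. The mex sequence of $\lambda$ is the longest sequence of consecutive integers $\mathrm{mex}(\lambda), \mathrm{mex}(\lambda)+1, \dots$ none of which is a part of $\lambda$; its length is a positive integer or infinite (e.g. $(4)$ has mex sequence $(1,2,3)$, $(9,4,4,3,1)$ has mex sequence $(2)$, and $(4,3,3,3,2,1,1)$ has infinite mex sequence $(5,6,7,\dots)$); an infinite length counts as at least $r$. An overpartition of $n$ is a partition of $n$ in which the first occurrence of each part size may be overlined; equivalently, a pair $(\lambda,\mu)$ with $\lambda$ a partition into distinct parts (the overlined parts), $\mu$ an arbitrary partition (the non-overlined parts), and $|\lambda|+|\mu|=n$. *)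

(* Defs.v *)
From mathcomp Require Import all_boot.
Set Implicit Arguments. Unset Strict Implicit. Unset Printing Implicit Defensive.

Definition is_partition (n : nat) (l : seq nat) : bool :=
  [&& sorted geq l, all (fun x => 0 < x) l & sumn l == n].

Definition is_distinct_partition (n : nat) (l : seq nat) : bool :=
  is_partition n l && uniq l.

Definition is_mex (l : seq nat) (m : nat) : Prop :=
  0 < m /\ m \notin l /\ (forall k, 0 < k < m -> k \in l).

Definition mex_seq_len_ge (r : nat) (l : seq nat) : Prop :=
  exists m, is_mex l m /\ (forall j, j < r -> m + j \notin l).

(* An overpartition of n: a pair (lam, mu), lam a partition into distinct
   parts (the overlined parts), mu an arbitrary partition (the non-overlined
   parts), with |lam| + |mu| = n. *)
Definition is_overpartition (n : nat) (p : seq nat * seq nat) : Prop :=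
  exists a b, [/\ is_distinct_partition a p.1, is_partition b p.2 & a + b = n].

Definition counts (T : eqType) (P : T -> Prop) (k : nat) : Prop :=
  exists s : seq T, [/\ uniq s, (forall x, P x <-> x \in s) & size s = k].

Definition restricted_overpartition (r n : nat) (p : seq nat * seq nat) : Prop :=
  is_overpartition n p /\ all (fun x => (r < x) && (odd x == odd r.+1)) p.2.

Definition mex_partition (r n : nat) (l : seq nat) : Prop :=
  is_partition n l /\ mex_seq_len_ge r l.

(* Main.v *)
Require Import Defs.
From mathcomp Require Import all_boot.
From mathcomp Require Import zify.
From Stdlib Require Import Classical_Prop.
Set Implicit Arguments. Unset Strict Implicit. Unset Printing Implicit Defensive.


Lemma counts_ext (T : eqType) (P Q : T -> Prop) k :
  (forall x, P x <-> Q x) -> counts P k -> counts Q k.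
Proof.
move=> H [s [us Hs sz]]; exists s; split=> // x; rewrite -Hs; exact: iff_sym.
Qed.

Lemma counts_bij (T U : eqType) (P : T -> Prop) (Q : U -> Prop) (f : T -> U) (g : U -> T) k :
  (forall x, P x -> Q (f x)) -> (forall y, Q y -> P (g y)) ->
  (forall x, P x -> g (f x) = x) -> (forall y, Q y -> f (g y) = y) ->
  counts P k -> counts Q k.
Proof.
move=> PQ QP gf fg [s [us Hs sz]]; exists (map f s); split.
- rewrite map_inj_in_uniq // => x y xs ys e.
  by rewrite -(gf x) ?e ?gf // Hs.
- move=> y; split.
  + move=> Qy; rewrite -(fg y Qy); apply: map_f; rewrite -Hs; exact: QP.
  + by case/mapP=> x xs ->; apply: PQ; rewrite Hs.
- by rewrite size_map.
Qed.

Lemma counts_split (T : eqType) (P C : T -> Prop) a b :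
  counts (fun x => P x /\ C x) a -> counts (fun x => P x /\ ~ C x) b ->
  counts P (a + b).
Proof.
move=> [s [us Hs sz]] [t [ut Ht szt]]; exists (s ++ t); split.
- rewrite cat_uniq us ut andbT /=; apply/hasPn => x xt; apply/negP => xs.
  by move: xt xs; rewrite -Hs -Ht => -[_ ?] [_ ?].
- move=> x; rewrite mem_cat; split.
  + move=> Px; case: (Classical_Prop.classic (C x)) => ?; apply/orP; [left; apply Hs|right; apply Ht]; by split.
  + by case/orP => [/Hs|/Ht] [].
- by rewrite size_cat sz szt.
Qed.

Lemma counts_empty (T : eqType) (P : T -> Prop) : (forall x, ~ P x) -> counts P 0.
Proof. by move=> H; exists [::]; split=> // x; split=> // /H. Qed.

Lemma counts_unique (T : eqType) (P : T -> Prop) a b : counts P a -> counts P b -> a = b.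
Proof.
move=> [s [us Hs <-]] [t [ut Ht <-]]; apply/perm_size/uniq_perm => // x.
by apply/idP/idP; rewrite -Hs -Ht.
Qed.

Definition ins (x : nat) (s : seq nat) := sort geq (x :: s).

Lemma geq_total : total geq.
Proof. by move=> x y; rewrite /geq /= leq_total. Qed.
Lemma geq_trans : transitive geq.
Proof. by move=> x y z /= h1 h2; apply: leq_trans h2 h1. Qed.
Lemma geq_anti : antisymmetric geq.
Proof. move=> x y /andP[h1 h2]; apply/eqP; rewrite eqn_leq; apply/andP; split; [exact: h2|exact: h1]. Qed.

Lemma memc (x : nat) (s : seq nat) : (x \in s) = (0 < count_mem x s).
Proof. by rewrite -has_pred1 has_count. Qed.

Lemma perm_cnt (s t : seq nat) : (forall x, count_mem x s = count_mem x t) -> perm_eq s t.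
Proof. by move=> H; rewrite /perm_eq; apply/allP => x _ /=; rewrite H. Qed.

Lemma sorted_perm_eq (s t : seq nat) : sorted geq s -> sorted geq t ->
  (forall x, count_mem x s = count_mem x t) -> s = t.
Proof. move=> ss st H; apply: (sorted_eq geq_trans geq_anti) => //; exact: perm_cnt. Qed.

Lemma perm_ins x s : perm_eq (ins x s) (x :: s).
Proof. by rewrite /ins perm_sort. Qed.

Lemma cnt_ins y x s : count_mem y (ins x s) = (y == x) + count_mem y s.
Proof. by move/permP: (perm_ins x s) => ->; rewrite /= eq_sym. Qed.

Lemma cnt_rem y x (s : seq nat) : count_mem y (rem x s) = count_mem y s - (y == x).
Proof.
case xs: (x \in s).
- move/permP: (perm_to_rem xs) => ->; rewrite /= eq_sym; lia.
- rewrite rem_id ?xs //; case: eqP => [->|]; last by rewrite subn0.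
  by move/negbT: xs; rewrite memc -leqNgt leqn0 => /eqP ->.
Qed.

Lemma sorted_ins x s : sorted geq (ins x s).
Proof. exact: (sort_sorted geq_total). Qed.

Lemma sorted_rem x s : sorted geq s -> sorted geq (rem x s).
Proof. move=> ss; exact: (subseq_sorted geq_trans (rem_subseq x s)). Qed.

Lemma sumn_ins x s : sumn (ins x s) = x + sumn s.
Proof. by rewrite (perm_sumn (perm_ins x s)). Qed.

Lemma sumn_rem x s : x \in s -> sumn (rem x s) + x = sumn s.
Proof. move=> xs; rewrite (perm_sumn (perm_to_rem xs)) /=; lia. Qed.

Lemma mem_le_sumn x s : x \in s -> x <= sumn s.
Proof.
elim: s => //= y s IH; rewrite in_cons => /orP[/eqP->|/IH]; lia.
Qed.

Lemma allpos_cnt (s : seq nat) : all (fun x => 0 < x) s = (count_mem 0 s == 0).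
Proof.
elim: s => //= y s ->; case: y => //=; lia.
Qed.

Lemma mex_ex (l : seq nat) : exists m, (0 < m) && (m \notin l).
Proof. exists (sumn l).+1; apply/andP; split=> //; apply/negP => /mem_le_sumn; lia. Qed.

Definition mexf (l : seq nat) := ex_minn (mex_ex l).

Lemma mexfP l : is_mex l (mexf l).
Proof.
rewrite /mexf; case: ex_minnP => m /andP[m0 ml] mmin; split=> //; split=> // k /andP[k0 km].
apply/negPn/negP => kl; have := mmin k; rewrite k0 kl => /(_ isT); lia.
Qed.

Lemma mex_uniq l m : is_mex l m -> mexf l = m.
Proof.
move=> [m0 [ml mlt]]; have [m'0 [m'l m'lt]] := mexfP l.
case: (ltngtP (mexf l) m) => // h.
- by move: m'l; rewrite mlt // m'0.
- by move: ml; rewrite m'lt // m0.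
Qed.

Lemma mexE r l : mex_seq_len_ge r l <-> forall j, j < r -> mexf l + j \notin l.
Proof.
split.
- by move=> [m [/mex_uniq -> H]].
- by move=> H; exists (mexf l); split=> //; exact: mexfP.
Qed.

Lemma mex_in l k : 0 < k -> k < mexf l -> k \in l.
Proof. by move=> k0 km; have [_ [_ H]] := mexfP l; apply: H; rewrite k0 km. Qed.
Lemma mex_notin l : mexf l \notin l.
Proof. by have [_ [H _]] := mexfP l. Qed.
Lemma mex_pos l : 0 < mexf l.
Proof. by have [H _] := mexfP l. Qed.

Lemma part_ins b x s : 0 < x -> is_partition b s -> is_partition (x + b) (ins x s).
Proof.
move=> x0 /and3P[ss sp /eqP sb]; apply/and3P; split.
- exact: sorted_ins.
- by move: sp; rewrite !allpos_cnt cnt_ins => /eqP ->; case: x x0.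
- by rewrite sumn_ins sb.
Qed.

Lemma part_rem b x s : x \in s -> is_partition b s -> is_partition (b - x) (rem x s).
Proof.
move=> xs /and3P[ss sp /eqP sb]; apply/and3P; split.
- exact: sorted_rem.
- by move: sp; rewrite !allpos_cnt cnt_rem => /eqP ->.
- by rewrite -sb -(sumn_rem xs) addnK.
Qed.

Lemma part_sum b s : is_partition b s -> sumn s = b.
Proof. by case/and3P=> _ _ /eqP. Qed.
Lemma part_sorted b s : is_partition b s -> sorted geq s.
Proof. by case/and3P. Qed.
Lemma part_pos b s x : is_partition b s -> x \in s -> 0 < x.
Proof. by case/and3P=> _ /allP H _ /H. Qed.


Lemma odd3 r : odd r.+3 = odd r.+1.
Proof. by rewrite /= !negbK. Qed.

Lemma A_notC r n p :
  (restricted_overpartition r n p /\ ~ (r.+1 \in p.2)) <-> restricted_overpartition r.+2 n p.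
Proof.
case: p => D M; rewrite /restricted_overpartition /=; split.
- move=> [[Hov /allP Hall] Hn]; split=> //; apply/allP => x xM.
  have /andP[rx px] := Hall x xM.
  have xne : x != r.+1 by apply/eqP => e; apply: Hn; rewrite -e.
  have xne2 : x != r.+2.
    by apply: contraTneq px => ->; rewrite /= negbK; case: (odd r).
  rewrite !negbK px andbT; lia.
- move=> [Hov /allP Hall]; split; first split=> //.
  + apply/allP => x xM; have /andP[rx px] := Hall x xM.
    move: px; rewrite !negbK => ->; rewrite andbT; lia.
  + by move=> /Hall /andP[]; lia.
Qed.

Lemma cnt_rem_ins y x s : count_mem y (rem x (ins x s)) = count_mem y s.
Proof. rewrite cnt_rem cnt_ins; lia. Qed.

Lemma cnt_ins_rem y x s : x \in s -> count_mem y (ins x (rem x s)) = count_mem y s.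
Proof.
move=> xs; have := xs; rewrite memc => xs'.
rewrite cnt_ins cnt_rem; case: (eqVneq y x) => [->|]; last by move=> _ /=; lia.
lia.
Qed.

Lemma A_C r n k :
  counts (restricted_overpartition r n) k ->
  counts (fun p => restricted_overpartition r (n + r.+1) p /\ r.+1 \in p.2) k.
Proof.
apply: (@counts_bij _ _ _ _ (fun p => (p.1, ins r.+1 p.2)) (fun p => (p.1, rem r.+1 p.2))).
- case=> D M [[a [b [HD HM ab]]] /allP Hall] /=; split; last first.
    by rewrite (perm_mem (perm_ins _ _)) mem_head.
  split.
  + exists a, (r.+1 + b); split=> //; last lia.
    exact: part_ins.
  + apply/allP => x; rewrite (perm_mem (perm_ins _ _)) in_cons => /orP[/eqP->|/Hall //].
    by rewrite ltnSn eqxx.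
- case=> D M [[[a [b [HD HM ab]]] /allP Hall] Hr] /=; split.
  + exists a, (b - r.+1); split=> //; first exact: part_rem.
    have := mem_le_sumn Hr; rewrite (part_sum HM); lia.
  + by apply/allP => x /mem_rem /Hall.
- case=> D M [[a [b [HD HM ab]]] _] /=; congr pair.
  apply: sorted_perm_eq; last by move=> y; rewrite cnt_rem_ins.
  + exact/sorted_rem/sorted_ins.
  + exact: part_sorted HM.
- case=> D M [[[a [b [HD HM ab]]] _] Hr] /=; congr pair.
  apply: sorted_perm_eq; last by move=> y; rewrite cnt_ins_rem.
  + exact: sorted_ins.
  + exact: part_sorted HM.
Qed.

Lemma notin_cnt (y : nat) (l : seq nat) : (y \notin l) = (count_mem y l == 0).
Proof. by rewrite memc -leqNgt leqn0. Qed.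

Lemma notin_cnt' (y : nat) (l : seq nat) : (y \in l) = false -> count_mem y l = 0.
Proof. by move=> h; apply/eqP; rewrite -notin_cnt h. Qed.

Lemma mp_facts r n l : mex_partition r n l ->
  sorted geq l /\ sumn l = n /\ count_mem 0 l = 0 /\
      (forall y, 0 < y < mexf l -> 0 < count_mem y l) /\ 0 < mexf l /\
      (forall j, j < r -> count_mem (mexf l + j) l = 0).
Proof.
move=> [/and3P[ss sp /eqP sn] /mexE Hg]; do !split=> //.
- by apply/eqP; rewrite -allpos_cnt.
- by move=> y /andP[y0 ym]; rewrite -memc; apply: mex_in.
- exact: mex_pos.
- by move=> j /Hg; rewrite notin_cnt => /eqP.
Qed.

Lemma mp_build r n l m : sorted geq l -> sumn l = n -> count_mem 0 l = 0 -> 0 < m ->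
  (forall y, 0 < y < m -> 0 < count_mem y l) ->
  (forall j, j < r.+1 -> count_mem (m + j) l = 0) ->
  mex_partition r.+1 n l /\ mexf l = m.
Proof.
move=> ss sn s0 m0 Hin Hg.
have mm : is_mex l m.
  split=> //; split; first by rewrite notin_cnt -(addn0 m) Hg.
  by move=> k /Hin; rewrite memc.
split; last exact: mex_uniq.
split; first by apply/and3P; split=> //; rewrite ?allpos_cnt ?s0 ?sn.
exists m; split=> // j /Hg; rewrite notin_cnt => ->.
by [].
Qed.

Definition C r l := (mexf l + r \in l) || (mexf l + r.+1 \in l).

Lemma B_notC r n l : (mex_partition r n l /\ ~ C r l) <-> mex_partition r.+2 n l.
Proof.
rewrite /mex_partition !mexE /C; split.
- move=> [[Hp Hg] HC]; split=> // j jr.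
  case: (ltnP j r) => [/Hg //|jr2].
  have [->|->] : j = r \/ j = r.+1 by lia.
  + by apply/negP => h; apply: HC; rewrite h.
  + by apply/negP => h; apply: HC; rewrite h orbT.
- move=> [Hp Hg]; split; first by split=> // j jr; apply: Hg; lia.
  by case/orP; apply/negP/Hg.
Qed.

Definition phi r (u : seq nat) := ins ((mexf u).-1 + r.+1) (rem (mexf u).-1 u).

Definition psi r (l : seq nat) :=
  let m := mexf l in
  let g := if m + r \in l then m + r else m + r.+1 in
  rem 0 (ins (g - r.+1) (rem g l)).

Lemma sumn_rem0 (s : seq nat) : sumn (rem 0 s) = sumn s.
Proof.
case h: (0 \in s); first by rewrite -(sumn_rem h) addn0.
by rewrite rem_id ?h.
Qed.

Lemma sumn_rem' x (s : seq nat) : sumn (rem x s) = sumn s - x * (x \in s).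
Proof.
case h: (x \in s); first by rewrite -(sumn_rem h); lia.
by rewrite rem_id ?h //; lia.
Qed.

Lemma B_phi r n u : mex_partition r.+1 n u ->
  [/\ mex_partition r.+1 (n + r.+2) (phi r.+1 u), C r.+1 (phi r.+1 u) &
      mexf (phi r.+1 u) = if (1 < mexf u) && (count_mem (mexf u).-1 u == 1)
                          then (mexf u).-1 else mexf u].
Proof.
move=> H; have [ss [sn [s0 [Hin [m0 Hg]]]]] := mp_facts H.
have Hl : forall y, count_mem y (phi r.+1 u) =
   (y == (mexf u).-1 + r.+2) + (count_mem y u - (y == (mexf u).-1)).
  by move=> y; rewrite /phi cnt_ins cnt_rem.
have sl : sorted geq (phi r.+1 u) by exact: sorted_ins.
have suml : sumn (phi r.+1 u) = n + r.+2.
  rewrite /phi sumn_ins sumn_rem' sn.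
  case: (posnP (mexf u).-1) => [->|hp]; first by rewrite mul0n subn0 add0n addnC.
  have := Hin (mexf u).-1; rewrite hp /= -memc => h.
  rewrite h ?muln1; last lia.
  have hh : (mexf u).-1 < mexf u by lia.
  have := mem_le_sumn (h hh); rewrite sn; lia.
have l0 : count_mem 0 (phi r.+1 u) = 0 by rewrite Hl s0; lia.
rewrite /C.
move: (phi r.+1 u) Hl sl suml l0 => l Hl sl suml l0.
move: (mexf u) Hl Hin Hg m0 => m Hl Hin Hg m0.
case hA: ((1 < m) && (count_mem m.-1 u == 1)).
- move/andP: hA => [h1 /eqP h2].
  have A1 : 0 < m.-1 by lia.
  have A2 : forall y, 0 < y < m.-1 -> 0 < count_mem y l.
    by move=> y /andP[y0 ym]; rewrite Hl; have := Hin y; lia.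
  have A3 : forall j, j < r.+1 -> count_mem (m.-1 + j) l = 0.
    case=> [|j] jr; first by rewrite addn0 Hl h2; lia.
    rewrite Hl addnS -addSn prednK //; have := Hg j; lia.
  have [Hp Hm] := mp_build sl suml l0 A1 A2 A3.
  rewrite Hm; split=> //.
  by apply/orP; right; rewrite memc Hl; lia.
- have hB : 1 < m -> count_mem m.-1 u != 1.
    by move=> h; apply: contraFneq hA => ->; rewrite h eqxx.
  have A2 : forall y, 0 < y < m -> 0 < count_mem y l.
    move=> y /andP[y0 ym]; rewrite Hl; have := Hin y.
    case: (eqVneq y m.-1) => [e|ne]; last lia.
    have := hB; rewrite -e; lia.
  have A3 : forall j, j < r.+1 -> count_mem (m + j) l = 0.
    by move=> j jr; rewrite Hl; have := Hg j; lia.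
  have [Hp Hm] := mp_build sl suml l0 m0 A2 A3.
  rewrite Hm; split=> //.
  by apply/orP; left; rewrite memc Hl; lia.
Qed.

Lemma B_psi r n l : mex_partition r.+1 (n + r.+2) l /\ C r.+1 l ->
  mex_partition r.+1 n (psi r.+1 l) /\
  (mexf (psi r.+1 l)).-1 + r.+2 = (if mexf l + r.+1 \in l then mexf l + r.+1 else mexf l + r.+2).
Proof.
move=> [H HC]; have [ss [sn [s0 [Hin [m0 Hg]]]]] := mp_facts H.
move: HC; rewrite /C /psi /=.
move: (mexf l) Hin Hg m0 => m Hin Hg m0 HC.
case hc: (m + r.+1 \in l).
- set t := m + r.+1 - r.+2.
  set v := rem 0 (ins t (rem (m + r.+1) l)).
  have Hv : forall y, count_mem y v = count_mem y l - (y == m + r.+1) + (y == t) - (y == 0).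
    by move=> y; rewrite /v cnt_rem cnt_ins cnt_rem; lia.
  have sv : sorted geq v by exact/sorted_rem/sorted_ins.
  have sumv : sumn v = n.
    rewrite /v sumn_rem0 sumn_ins sumn_rem' hc muln1 sn /t.
    have := mem_le_sumn hc; rewrite sn; lia.
  have v0 : count_mem 0 v = 0 by rewrite Hv s0; lia.
  have A2 : forall y, 0 < y < m -> 0 < count_mem y v.
    by move=> y /andP[y0 ym]; rewrite Hv; have := Hin y; lia.
  have A3 : forall j, j < r.+1 -> count_mem (m + j) v = 0.
    by move=> j jr; rewrite Hv; have := Hg j; rewrite /t; lia.
  have [Hp Hm] := mp_build sv sumv v0 m0 A2 A3.
  by rewrite Hm; split=> //; lia.
- have hc2 : m + r.+2 \in l by move: HC; rewrite hc.
  set t := m + r.+2 - r.+2.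
  set v := rem 0 (ins t (rem (m + r.+2) l)).
  have Hv : forall y, count_mem y v = count_mem y l - (y == m + r.+2) + (y == t) - (y == 0).
    by move=> y; rewrite /v cnt_rem cnt_ins cnt_rem; lia.
  have sv : sorted geq v by exact/sorted_rem/sorted_ins.
  have sumv : sumn v = n.
    rewrite /v sumn_rem0 sumn_ins sumn_rem' hc2 muln1 sn /t.
    have := mem_le_sumn hc2; rewrite sn; lia.
  have v0 : count_mem 0 v = 0 by rewrite Hv s0; lia.
  have A2 : forall y, 0 < y < m.+1 -> 0 < count_mem y v.
    move=> y /andP[y0 ym]; rewrite Hv; case: (eqVneq y m) => [->|ne]; first by rewrite /t; lia.
    have := Hin y; lia.
  have A3 : forall j, j < r.+1 -> count_mem (m.+1 + j) v = 0.
    move=> j jr; rewrite Hv addSnnS; case: (ltnP j.+1 r.+1) => jr2.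
    + have := Hg j.+1 jr2; rewrite /t; lia.
    + have e : j.+1 = r.+1 by lia.
      rewrite e (notin_cnt' hc) /t; lia.
  have [Hp Hm] := mp_build sv sumv v0 (ltn0Sn m) A2 A3.
  by rewrite Hm; split=> //; lia.
Qed.

Lemma psi_phi r n u : mex_partition r.+1 n u -> psi r.+1 (phi r.+1 u) = u.
Proof.
move=> H; have [Hp HC Hm] := B_phi H.
have [ss [sn [s0 [Hin [m0 Hg]]]]] := mp_facts H.
have Hl : forall y, count_mem y (phi r.+1 u) =
   (y == (mexf u).-1 + r.+2) + (count_mem y u - (y == (mexf u).-1)).
  by move=> y; rewrite /phi cnt_ins cnt_rem.
rewrite /psi /=.
have -> : (if mexf (phi r.+1 u) + r.+1 \in phi r.+1 u then mexf (phi r.+1 u) + r.+1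
           else mexf (phi r.+1 u) + r.+2) = (mexf u).-1 + r.+2.
  move: Hm; case: ifP => hA Hm; rewrite Hm.
  + have -> : (mexf u).-1 + r.+1 = mexf u + r by lia.
    rewrite memc Hl; have := Hg r (ltnSn r) => h; rewrite ifF //; apply/negbTE; rewrite -leqNgt; lia.
  + have -> : mexf u + r.+1 \in phi r.+1 u by rewrite memc Hl; lia.
    lia.
move: (phi r.+1 u) Hl => l Hl.
apply: sorted_perm_eq; first exact/sorted_rem/sorted_ins.
  exact: ss.
move=> y; rewrite cnt_rem cnt_ins cnt_rem Hl.
have cm : 0 < (mexf u).-1 -> 0 < count_mem (mexf u).-1 u by move=> h; apply: Hin; lia.
case: (eqVneq y 0) => [->|y0]; first by rewrite s0; lia.
case: (eqVneq y (mexf u).-1) => [e|ym]; [subst y; move: y0 cm; rewrite -lt0n|]; lia.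
Qed.

Lemma phi_psi r n l : mex_partition r.+1 (n + r.+2) l /\ C r.+1 l ->
  phi r.+1 (psi r.+1 l) = l.
Proof.
move=> HH; have [Hp He] := B_psi HH.
case: HH => H HC; have [ss [sn [s0 [Hin [m0 Hg]]]]] := mp_facts H.
have [g [ep [eg gl]]] : exists g, psi r.+1 l = rem 0 (ins (g - r.+2) (rem g l)) /\
   (if mexf l + r.+1 \in l then mexf l + r.+1 else mexf l + r.+2) = g /\ g \in l.
  move: HC; rewrite /C /psi /=; case: ifP => h HC.
  - by exists (mexf l + r.+1).
  - by exists (mexf l + r.+2); split=> //; split=> //; move: HC; rewrite h.
rewrite eg in He.
rewrite /phi He.
have -> : (mexf (psi r.+1 l)).-1 = g - r.+2 by lia.
have Hv : forall y, count_mem y (psi r.+1 l) =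
   count_mem y l - (y == g) + (y == g - r.+2) - (y == 0).
  by move=> y; rewrite ep cnt_rem cnt_ins cnt_rem; lia.
apply: sorted_perm_eq; first exact: sorted_ins.
  exact: ss.
move=> y; rewrite cnt_ins cnt_rem Hv.
have := gl; rewrite memc => gl'.
have g0 : 0 < g by move: He; lia.
case: (eqVneq y 0) => [->|y0]; first by rewrite s0; lia.
case: (eqVneq y g) => [->|yg]; lia.
Qed.

Lemma B_C r n k :
  counts (mex_partition r.+1 n) k ->
  counts (fun l => mex_partition r.+1 (n + r.+2) l /\ C r.+1 l) k.
Proof.
apply: (@counts_bij _ _ _ _ (phi r.+1) (psi r.+1)).
- by move=> u /B_phi [].
- by move=> l /B_psi [].
- by move=> u; apply: psi_phi.
- by move=> l; apply: phi_psi.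
Qed.

Definition gapless (l : seq nat) := forall x, x \in l -> forall y, 0 < y <= x -> y \in l.

Definition Qd n j (D : seq nat) := is_distinct_partition n D /\ all (fun x => x <= j) D.
Definition Gl n j (l : seq nat) := [/\ is_partition n l, gapless l & size l <= j].

Lemma counts_nil n : counts (fun l : seq nat => l = [::] /\ n = 0) (n == 0).
Proof.
case: n => [|n].
- by exists [:: [::]]; split=> // l; rewrite inE; split=> [[->]|/eqP->].
- by apply: counts_empty => l [].
Qed.

Lemma size_le_sumn (l : seq nat) : all (fun x => 0 < x) l -> size l <= sumn l.
Proof. elim: l => //= x l IH /andP[x0 /IH]; lia. Qed.

Lemma sorted_cat1 (s : seq nat) c : sorted geq s -> all (fun x => 0 < x) s ->
  sorted geq (s ++ nseq c 1).
Proof.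
elim: s => [|x s IH] /=.
- move=> _ _; elim: c => //= c IH; case: c IH => //= c ->; by rewrite andbT.
- rewrite !(path_sortedE geq_trans) all_cat => /andP[ax ss] /andP[x0 sp].
  rewrite ax IH // andbT /=; apply/allP => y /nseqP [-> _]; exact: x0.
Qed.

Definition tau j (u : seq nat) := map S u ++ nseq (j.+1 - size u) 1.
Definition sigma (l : seq nat) := map predn (filter (fun x => 1 < x) l).

Lemma mem_sigma y l : (y \in sigma l) = (0 < y) && (y.+1 \in l).
Proof.
apply/mapP/andP.
- case=> x; rewrite mem_filter => /andP[x1 xl] ->; split; first lia.
  by have -> : (x.-1).+1 = x by lia.
- move=> [y0 yl]; exists y.+1 => //; rewrite mem_filter yl; lia.
Qed.

Lemma sumn_mapS (s : seq nat) : sumn (map S s) = sumn s + size s.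
Proof. elim: s => //= x s ->; lia. Qed.

Lemma sigma_tau j u : all (fun x => 0 < x) u -> sigma (tau j u) = u.
Proof.
move=> up; rewrite /sigma /tau filter_cat.
have -> : [seq x <- map S u | 1 < x] = map S u.
  apply/all_filterP; apply/allP => x /mapP [y yu ->]; move/allP: up => /(_ y yu); lia.
have -> : [seq x <- nseq (j.+1 - size u) 1 | 1 < x] = [::].
  by elim: (j.+1 - size u).
by rewrite cats0 -map_comp map_id_in.
Qed.

Lemma sorted_tau j u : sorted geq u -> all (fun x => 0 < x) u -> sorted geq (tau j u).
Proof.
move=> su up; apply: sorted_cat1.
- rewrite sorted_map; apply: sub_sorted su => x y /=; lia.
- by apply/allP => x /mapP [y _ ->].
Qed.

Lemma sumn_tau j u : size u <= j -> sumn (tau j u) = sumn u + j.+1.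
Proof. move=> h; rewrite /tau sumn_cat sumn_mapS sumn_nseq; lia. Qed.

Lemma size_tau j u : size u <= j -> size (tau j u) = j.+1.
Proof. move=> h; rewrite /tau size_cat size_map size_nseq; lia. Qed.

Lemma tau_part n j u : Gl n j u -> Gl (n + j.+1) j.+1 (tau j u) /\ size (tau j u) = j.+1.
Proof.
move=> [/and3P[su up /eqP sn] gu szu].
have st := sorted_tau j su up.
split; last exact: size_tau.
split.
- apply/and3P; split=> //.
  + rewrite all_cat; apply/andP; split; first by apply/allP => x /mapP [y _ ->].
    by apply/allP => x /nseqP [-> _].
  + by rewrite sumn_tau // sn.
- move=> x; rewrite /tau mem_cat => xin y /andP[y0 yx].
  rewrite mem_cat; case: (eqVneq y 1) => [->|y1].
  + apply/orP; right; rewrite mem_nseq eqxx andbT; lia.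
  + apply/orP; left; case/orP: xin => [/mapP [w wu ex]|/nseqP [ex _]]; last lia.
    have -> : y = (y.-1).+1 by lia.
    apply: map_f; apply: (gu w wu); lia.
- by rewrite size_tau.
Qed.

Lemma size_sigma l : size (sigma l) = count (fun x => 1 < x) l.
Proof. by rewrite /sigma size_map size_filter. Qed.

Lemma tau_sigma j l : sorted geq l -> all (fun x => 0 < x) l -> size l = j.+1 ->
  tau j (sigma l) = l.
Proof.
move=> sl lp szl.
have e1 : map S (sigma l) = filter (fun x => 1 < x) l.
  rewrite /sigma -map_comp map_id_in // => x; rewrite mem_filter /=; lia.
have e2 : nseq (j.+1 - size (sigma l)) 1 = filter (predC (fun x => 1 < x)) l.
  have /all_pred1P -> : all (pred1 1) (filter (predC (fun x => 1 < x)) l).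
    apply/allP => x; rewrite mem_filter /= => /andP[x1 xl].
    move/allP: lp => /(_ x xl); lia.
  rewrite size_filter size_sigma -szl -(count_predC (fun x => 1 < x) l); congr nseq; exact: addKn.
apply: (sorted_eq geq_trans geq_anti).
- apply: sorted_tau.
  + rewrite /sigma sorted_map; apply: sub_sorted (sorted_filter geq_trans _ sl) => x y /=; lia.
  + by apply/allP => x; rewrite mem_sigma => /andP[].
- exact: sl.
- by rewrite /tau e1 e2 perm_filterC.
Qed.

Lemma sigma_part n j l : Gl (n + j.+1) j.+1 l /\ size l = j.+1 -> Gl n j (sigma l).
Proof.
move=> [[/and3P[sl lp /eqP sn] gl _] szl].
have et := tau_sigma sl lp szl.
have ssig : sorted geq (sigma l).
  rewrite /sigma sorted_map; apply: sub_sorted (sorted_filter geq_trans _ sl) => x y /=; lia.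
have psig : all (fun x => 0 < x) (sigma l).
  by apply/allP => x; rewrite mem_sigma => /andP[].
have szs : size (sigma l) <= j.
  have one : 1 \in l.
    move: szl gl lp; case: l {sl sn et ssig psig} => // x l' _ gl lp.
    apply: (gl x (mem_head _ _)); move: lp => /= /andP[x0 _]; lia.
  have c1 : 0 < count (predC (fun x => 1 < x)) l.
    by rewrite -has_count; apply/hasP; exists 1.
  have := count_predC (fun x => 1 < x) l; rewrite szl size_sigma.
  move: c1; move: (count _ l) (count _ l) => a b; lia.
split.
- apply/and3P; split=> //; apply/eqP.
  have := sumn_tau szs; rewrite et; lia.
- move=> y; rewrite mem_sigma => /andP[y0 yl] z /andP[z0 zy].
  rewrite mem_sigma z0 /=; apply: (gl _ yl); lia.
- exact: szs.
Qed.

Lemma G_C n j k : counts (Gl n j) k ->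
  counts (fun l => Gl (n + j.+1) j.+1 l /\ size l = j.+1) k.
Proof.
apply: (@counts_bij _ _ _ _ (tau j) sigma).
- by move=> u /tau_part.
- by move=> l /sigma_part.
- by move=> u [/and3P[_ up _] _ _]; apply: sigma_tau.
- by move=> l [[/and3P[sl lp _] _ _] szl]; apply: tau_sigma.
Qed.

Lemma G_notC n j l : (Gl n j.+1 l /\ ~ (size l = j.+1)) <-> Gl n j l.
Proof.
split.
- by move=> [[h1 h2 h3] h4]; split=> //; move: h3 h4; lia.
- by move=> [h1 h2 h3]; split; [split=> //; lia | lia].
Qed.

Lemma Q_C n j k : counts (Qd n j) k ->
  counts (fun D => Qd (n + j.+1) j.+1 D /\ j.+1 \in D) k.
Proof.
apply: (@counts_bij _ _ _ _ (ins j.+1) (rem j.+1)).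
- move=> D [/andP[HD uD] /allP aD]; split; last by rewrite (perm_mem (perm_ins _ _)) mem_head.
  split.
  + apply/andP; split; first by rewrite addnC; apply: part_ins.
    rewrite (perm_uniq (perm_ins _ _)) /= uD andbT; apply/negP => /aD; lia.
  + apply/allP => x; rewrite (perm_mem (perm_ins _ _)) in_cons => /orP[/eqP->//|/aD]; lia.
- move=> D [[/andP[HD uD] /allP aD] jD]; split.
  + apply/andP; split; last exact: rem_uniq.
    by have := part_rem jD HD; rewrite addnK.
  + apply/allP => x xr; have := aD x (mem_rem xr).
    case: (eqVneq x j.+1) => [e|ne]; last lia.
    by move: xr; rewrite e mem_rem_uniqF.
- move=> D [/andP[HD _] _]; apply: sorted_perm_eq; last by move=> y; rewrite cnt_rem_ins.
  + exact/sorted_rem/sorted_ins.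
  + exact: part_sorted HD.
- move=> D [[/andP[HD _] _] jD]; apply: sorted_perm_eq; last by move=> y; rewrite cnt_ins_rem.
  + exact: sorted_ins.
  + exact: part_sorted HD.
Qed.

Lemma Q_notC n j D : (Qd n j.+1 D /\ ~ (j.+1 \in D)) <-> Qd n j D.
Proof.
split.
- move=> [[h1 /allP h2] h3]; split=> //; apply/allP => x xD.
  have := h2 x xD; case: (eqVneq x j.+1) => [e|ne]; last lia.
  by move: xD; rewrite e => /h3.
- move=> [h1 /allP h2]; split; first split=> //.
  + by apply/allP => x /h2; lia.
  + by move=> /h2; lia.
Qed.

Lemma conj_count j n : exists k, counts (Qd n j) k /\ counts (Gl n j) k.
Proof.
elim: j n => [|j IH] n.
- exists (n == 0); split.
  + apply: counts_ext (counts_nil n) => D; split.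
    * by move=> [-> ->]; split=> //.
    * case: D => [[/andP[/and3P[_ _ /eqP <-]]] //|x D [/andP[/and3P[_ /= /andP[x0 _] _] _] /= /andP[]]]; lia.
  + apply: counts_ext (counts_nil n) => l; split.
    * by move=> [-> ->]; split.
    * by case: l => [[/and3P[_ _ /eqP <-]]|x l [_ _ /=]].
- case: (leqP j.+1 n) => hn.
  + have e : n = (n - j.+1) + j.+1 by lia.
    have [k1 [Q1 G1]] := IH (n - j.+1).
    have [k2 [Q2 G2]] := IH n.
    exists (k1 + k2); split.
    * apply: (counts_split (C := fun D : seq nat => j.+1 \in D)).
      - by rewrite {1}e; apply: Q_C.
      - by apply: counts_ext Q2 => D; apply: iff_sym (Q_notC n j D).
    * apply: (counts_split (C := fun l : seq nat => size l = j.+1)).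
      - by rewrite {1}e; apply: G_C.
      - by apply: counts_ext G2 => l; apply: iff_sym (G_notC n j l).
  + have [k2 [Q2 G2]] := IH n.
    exists (0 + k2); split.
    * apply: (counts_split (C := fun D : seq nat => j.+1 \in D)).
      - apply: counts_empty => D [[/andP[/and3P[_ _ /eqP sn] _] _] jD].
        by have := mem_le_sumn jD; lia.
      - by apply: counts_ext Q2 => D; apply: iff_sym (Q_notC n j D).
    * apply: (counts_split (C := fun l : seq nat => size l = j.+1)).
      - apply: counts_empty => l [[/and3P[_ lp /eqP sn] _ _] sz].
        by have := size_le_sumn lp; lia.
      - by apply: counts_ext G2 => l; apply: iff_sym (G_notC n j l).
Qed.

Lemma A_base r n k : n <= r -> counts (Qd n n) k -> counts (restricted_overpartition r n) k.
Proof.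
move=> nr.
apply: (@counts_bij _ _ _ _ (fun D => (D, [::])) (fun p => p.1)).
- move=> D [HD _]; split=> //; exists n, 0; split=> //; by rewrite addn0.
- case=> D M [[a [b [/= HD /= HM ab]]] /allP Hall] /=.
  case: M HM Hall => [|x M] HM Hall.
  + have := part_sum HM => /= b0; subst b; rewrite addn0 in ab; subst a.
    split=> //; apply/allP => x xD; case/andP: HD => /and3P[_ _ /eqP <-] _.
    exact: mem_le_sumn.
  + have := Hall x (mem_head _ _) => /andP[rx _].
    have := mem_le_sumn (mem_head x M); rewrite (part_sum HM); lia.
- by [].
- case=> D M [[a [b [/= HD /= HM ab]]] /allP Hall] /=. case: M HM Hall => // x M HM Hall.
  have := Hall x (mem_head _ _) => /andP[rx _].
  have := mem_le_sumn (mem_head x M); rewrite (part_sum HM); lia.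
Qed.

Lemma B_base r n l : n <= r -> (Gl n n l <-> mex_partition r n l).
Proof.
move=> nr; split.
- move=> [Hp gl szl]; split=> //; apply/mexE => j jr; apply/negP => h.
  by have := mex_notin l; rewrite (gl _ h (mexf l)) // mex_pos /=; lia.
- move=> [Hp /mexE Hg]; split=> //.
  + move=> x xl y /andP[y0 yx].
    have xn : x <= n by rewrite -(part_sum Hp); exact: mem_le_sumn.
    case: (ltnP x (mexf l)) => xm.
    * apply: mex_in => //; lia.
    * have := Hg (x - mexf l); rewrite subnKC // xl => /(_ _) h.
      have x0 : 0 < mexf l by exact: mex_pos.
      by move: (h ltac:(lia)).
  + case/and3P: Hp => _ lp /eqP sn; rewrite -sn; exact: size_le_sumn.
Qed.

Lemma main_count n r : exists k,
  counts (restricted_overpartition r.+1 n) k /\ counts (mex_partition r.+1 n) k.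
Proof.
elim/ltn_ind: n r => n IHn r.
have [d Hd] : exists d, n - r <= d by exists (n - r).
elim: d r Hd => [|d IHd] r Hd.
all: case: (leqP n r.+1) => hn.
1,3: have [k [Q G]] := conj_count n n; exists k; split;
  [exact: A_base hn Q | apply: counts_ext G => l; exact: B_base].
- lia.
- have e : n = (n - r.+2) + r.+2 by lia.
  have [k1 [A1 B1]] := IHn (n - r.+2) ltac:(lia) r.
  have [k2 [A2 B2]] := IHd r.+2 ltac:(lia).
  exists (k1 + k2); split.
  + apply: (counts_split (C := fun p : seq nat * seq nat => r.+2 \in p.2)).
    * by rewrite {1}e; apply: A_C.
    * by apply: counts_ext A2 => p; apply: iff_sym (A_notC r.+1 n p).
  + apply: (counts_split (C := fun l => C r.+1 l)).
    * by rewrite {1}e; apply: B_C.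
    * by apply: counts_ext B2 => l; apply: iff_sym (B_notC r.+1 n l).
Qed.

Theorem theorem2p3 (r : nat) (hr : 1 <= r) (n : nat) :
  exists k : nat,
    counts (restricted_overpartition r n) k /\ counts (mex_partition r n) k.
Proof. by case: r hr => // r _; exact: main_count. Qed.
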